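(* Let $u,w\in(-1,1)$, let $B(z)=\left(\frac{z-w}{1-wz}\right)\left(\frac{z-u}{1-uz}\right)$, let $c$ be the unique critical point of $B$ in the open unit disk $\mathbb{D}$, and let \[ \lambda=\exp\!\left[i\left(\pi+2\arg(1-\overline{c}w)+2\arg(1-\overline{c}u)+2\arg(1-c\overline{B(c)})\right)\right]\left(\frac{B(c)-c}{1-\overline{c}B(c)}\right). \] Then $\lambda$ is real.
   Context: The quantities $\exp(2i\arg(\cdot))$ do not depend on the choice of branch of $\arg$. *)

(* Defs.v *)
From Stdlib Require Import Reals.
From Coquelicot Require Import Coquelicot.
Open Scope R_scope.
Open Scope C_scope.

Definition cis (t : R) : C := (cos t, sin t).

(* t is an argument (some branch of arg) of z : z = |z| exp(i t). *)
Definition is_arg (z : C) (t : R) : Prop := z = RtoC (Cmod z) * cis t.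

Definition blaschke2 (u w : R) (z : C) : C :=
  ((z - RtoC w) / (1 - RtoC w * z)) * ((z - RtoC u) / (1 - RtoC u * z)).

Definition is_critical_point (f : C -> C) (c : C) : Prop :=
  @is_derive C_AbsRing C_NormedModule f c (RtoC 0).

(* Main.v *)
Require Import Defs.
From Stdlib Require Import Reals Lra.
From Coquelicot Require Import Coquelicot.
Open Scope R_scope.
Open Scope C_scope.
Lemma conj_derive (f g : C -> C) (x l : C) :
  (forall z, g z = Cconj (f (Cconj z))) ->
  @is_derive C_AbsRing C_NormedModule f x l ->
  @is_derive C_AbsRing C_NormedModule g (Cconj x) (Cconj l).
Proof.
  intros Hg [_ H]. split. apply is_linear_scal_l.
  intros x0 Hx0. apply (@is_filter_lim_locally_unique C_AbsRing (AbsRing_NormedModule C_AbsRing)) in Hx0. subst x0.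
  intros eps. destruct (H x (fun P HP => HP) eps) as [d Hd].
  exists d. intros y Hy.
  assert (Hb : abs (minus (Cconj y) x) < d).
  { unfold ball in *; simpl in *. unfold AbsRing_ball in *. 
    replace (minus (Cconj y) x) with (Cconj (minus y (Cconj x))).
    2:{ destruct y, x; unfold minus, plus, opp, Cconj; simpl; unfold Cplus, Copp; simpl; f_equal; ring. }
    unfold abs; simpl. rewrite Cmod_conj. exact Hy. }
  specialize (Hd _ Hb). simpl in Hd |- *.
  rewrite !Hg, Cconj_conj.
  match goal with |- norm ?A <= _ * norm ?B =>
    assert (EA : A = Cconj (minus (minus (f (Cconj y)) (f x)) (scal (minus (Cconj y) x) l)));
    [| assert (EB : B = Cconj (minus (Cconj y) x)); [| rewrite EA, EB]] end.
  { unfold minus, plus, opp, scal; simpl. unfold mult; simpl.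
      destruct (f (Cconj y)), (f x), y, x, l; unfold Cconj, Cplus, Copp, Cmult; simpl; f_equal; ring. }
  { destruct y, x; unfold minus, plus, opp, Cconj; simpl; unfold Cplus, Copp; simpl; f_equal; ring. }
  change (Cmod (Cconj (minus (minus (f (Cconj y)) (f x)) (scal (minus (Cconj y) x) l))) <= eps * Cmod (Cconj (minus (Cconj y) x))).
  rewrite !Cmod_conj. exact Hd.
Qed.

Lemma Cinv_conj' (a : C) : Cconj (/ a) = / Cconj a.
Proof.
  destruct a as [x y]. unfold Cinv, Cconj; simpl.
  replace (x * (x * 1) + - y * (- y * 1))%R with (x * (x * 1) + y * (y * 1))%R by ring.
  apply injective_projections; simpl; unfold Rdiv; ring.
Qed.

Lemma Cdiv_conj' (a b : C) : Cconj (a / b) = Cconj a / Cconj b.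
Proof. unfold Cdiv. rewrite Cmult_conj, Cinv_conj'. reflexivity. Qed.

Lemma RtoC_conj (r : R) : Cconj (RtoC r) = RtoC r.
Proof. unfold Cconj, RtoC; simpl. apply injective_projections; simpl; ring. Qed.

Lemma blaschke_conj u w z : blaschke2 u w (Cconj z) = Cconj (blaschke2 u w z).
Proof.
  unfold blaschke2. rewrite Cmult_conj, !Cdiv_conj', !Cminus_conj, !Cmult_conj, !RtoC_conj.
  replace (Cconj 1) with (RtoC 1) by (symmetry; apply RtoC_conj). reflexivity.
Qed.

Lemma arg_real_sin (z : C) (t : R) : is_arg z t -> Im z = 0%R -> Re z <> 0%R -> sin t = 0%R.
Proof.
  unfold is_arg, cis. intros H Hi Hr.
  assert (H1 := f_equal fst H). assert (H2 := f_equal snd H).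
  simpl in H1, H2. unfold Re, Im in *. rewrite Hi in H2.
  assert (Cmod z <> 0%R). { intro E. rewrite E in H1. apply Hr. rewrite H1. ring. }
  assert (Cmod z * sin t = 0)%R by lra.
  apply Rmult_integral in H3. destruct H3; [contradiction|assumption].
Qed.

Lemma Im_div_real (a b : C) : Im a = 0%R -> Im b = 0%R -> Im (a / b) = 0%R.
Proof.
  destruct a as [a1 a2], b as [b1 b2]. unfold Im; simpl. intros -> ->.
  unfold Cdiv, Cinv, Cmult; simpl. unfold Rdiv. ring.
Qed.

Theorem lemma3p5 (u w : R) (c : C) (t1 t2 t3 : R) :
  -1 < u < 1 -> -1 < w < 1 ->
  Cmod c < 1 ->
  is_critical_point (blaschke2 u w) c ->
  (forall c' : C, Cmod c' < 1 -> is_critical_point (blaschke2 u w) c' -> c' = c) ->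
  is_arg (1 - Cconj c * RtoC w) t1 ->
  is_arg (1 - Cconj c * RtoC u) t2 ->
  is_arg (1 - c * Cconj (blaschke2 u w c)) t3 ->
  Im (cis (PI + 2 * t1 + 2 * t2 + 2 * t3)
      * ((blaschke2 u w c - c) / (1 - Cconj c * blaschke2 u w c))) = 0.
Proof.
  intros Hu Hw Hc Hcrit Huniq A1 A2 A3.
  assert (Hcc : Cconj c = c).
  { apply Huniq. rewrite Cmod_conj; exact Hc.
    unfold is_critical_point in *.
    replace (RtoC 0) with (Cconj (RtoC 0)) by apply RtoC_conj.
    apply (conj_derive (blaschke2 u w)); [|exact Hcrit].
    intros z. rewrite <- blaschke_conj, Cconj_conj. reflexivity. }
  assert (HB : Cconj (blaschke2 u w c) = blaschke2 u w c).
  { rewrite <- blaschke_conj, Hcc. reflexivity. }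
  set (b := blaschke2 u w c) in *. clearbody b.
  destruct c as [a a2]. unfold Cconj in Hcc; simpl in Hcc.
  assert (a2 = 0%R) by (injection Hcc; lra). subst a2.
  destruct b as [p q]. unfold Cconj in HB; simpl in HB.
  assert (q = 0%R) by (injection HB; lra). subst q.
  assert (Ha : (a * a < 1)%R).
  { unfold Cmod in Hc; simpl in Hc.
    replace (a * (a * 1) + 0 * (0 * 1))%R with (a * a)%R in Hc by ring.
    change (a * a)%R with (Rsqr a) in Hc. rewrite sqrt_Rsqr_abs in Hc.
    apply Rabs_def2 in Hc. nra. }
  assert (Hw2 : (w * w < 1)%R) by nra.
  assert (Hu2 : (u * u < 1)%R) by nra.
  assert (S1 : sin t1 = 0%R).
  { apply (arg_real_sin _ _ A1).
    - unfold Im, Cconj, Cminus, Cplus, Copp, Cmult, RtoC; simpl; ring.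
    - unfold Re, Cconj, Cminus, Cplus, Copp, Cmult, RtoC; simpl.
      assert ((a*w)*(a*w) < 1)%R by nra. nra. }
  assert (S2 : sin t2 = 0%R).
  { apply (arg_real_sin _ _ A2).
    - unfold Im, Cconj, Cminus, Cplus, Copp, Cmult, RtoC; simpl; ring.
    - unfold Re, Cconj, Cminus, Cplus, Copp, Cmult, RtoC; simpl.
      assert ((a*u)*(a*u) < 1)%R by nra. nra. }
  assert (HD : Im (1 - Cconj (a, 0%R) * (p, 0%R)) = 0%R).
  { unfold Im, Cconj, Cminus, Cplus, Copp, Cmult, RtoC; simpl; ring. }
  destruct (Req_dec (1 - a * p) 0) as [Z|NZ].
  - replace (1 - Cconj (a, 0%R) * (p, 0%R)) with (RtoC 0).
    2:{ unfold Cconj, Cminus, Cplus, Copp, Cmult, RtoC; simpl.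
        apply injective_projections; simpl; lra. }
    unfold Cdiv, Cinv, Cmult, Im, RtoC; simpl. unfold Rdiv. ring.
  - assert (S3 : sin t3 = 0%R).
    { apply (arg_real_sin _ _ A3).
      - unfold Im, Cconj, Cminus, Cplus, Copp, Cmult, RtoC; simpl; ring.
      - unfold Re, Cconj, Cminus, Cplus, Copp, Cmult, RtoC; simpl.
        intro E; apply NZ; lra. }
    assert (HX : Im (((p, 0%R) - (a, 0%R)) / (1 - Cconj (a, 0%R) * (p, 0%R))) = 0%R).
    { apply Im_div_real; [|exact HD]. unfold Im, Cminus, Cplus, Copp; simpl; ring. }
    set (X := ((p, 0%R) - (a, 0%R)) / (1 - Cconj (a, 0%R) * (p, 0%R))) in *.
    destruct X as [x1 x2]. unfold Im in HX; simpl in HX. subst x2.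
    unfold cis, Cmult, Im; simpl.
    rewrite !sin_plus, !cos_plus, !sin_2a, sin_PI, S1, S2, S3. ring.
Qed.
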